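(* Let $n\ge k\ge1$, $l\ge0$, $d=2^n$, $\gamma=3/4$, $\nu=1/2$, and $$\alpha_k=\frac{d^2(d+3)(d\gamma^k+3\nu^k)-4(d+1)(d+2)}{(d^2-1)(d+2)(d+4)},\qquad \beta_k=\frac{d^2(d^2\gamma^k-4)+4}{(d^2-1)(d^2-4)},$$ where for $n=1$ the value of $\beta_1$ is understood as the limit $d\to2$ of the formula $\beta_1=\frac{3d^2-4}{4(d^2-1)}$ (i.e. $\beta_1=\frac{3d^2-4}{4(d^2-1)}$ in general). Then $\alpha_k$ and $\beta_k$ are monotonically increasing in $d$ (over $d=2^n$, $n\ge k$) and monotonically decreasing in $k$; $\lim_{d\to\infty}\alpha_k=\lim_{d\to\infty}\beta_k=\gamma^k$; $0<\alpha_k<\gamma^k$ and $0<\beta_k<\gamma^k$; and $$\gamma^{kl}\Bigl[1-\frac{kl(3d+1)}{3(d^2-1)}\Bigr]\le\alpha_1^{kl}\le\alpha_k^l\le\beta_k^l\le\beta_1^{kl}\le\alpha_1^{kl}+\frac{kld}{d^2-1}\gamma^{kl}.$$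
   Context: Note that $\alpha_1=\frac{3d^2-3d-4}{4(d^2-1)}$ and $\beta_1=\frac{3d^2-4}{4(d^2-1)}$. *)

(* Defs.v *)
From Stdlib Require Import Reals Lra Lia.
Open Scope R_scope.

Definition dim (n : nat) : R := 2 ^ n.
Definition gamma : R := 3 / 4.
Definition nu : R := 1 / 2.

Definition alpha (n k : nat) : R :=
  let d := dim n in
  (d ^ 2 * (d + 3) * (d * gamma ^ k + 3 * nu ^ k) - 4 * (d + 1) * (d + 2))
  / ((d ^ 2 - 1) * (d + 2) * (d + 4)).

(* beta_k with d = 2^n; for k = 1 we use the closed form
   (3d^2-4)/(4(d^2-1)), which agrees with the general formula whenever
   d <> 2 and is its limit as d -> 2 (the case n = 1). *)
Definition beta (n k : nat) : R :=
  let d := dim n in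
  if Nat.eqb k 1 then (3 * d ^ 2 - 4) / (4 * (d ^ 2 - 1))
  else (d ^ 2 * (d ^ 2 * gamma ^ k - 4) + 4) / ((d ^ 2 - 1) * (d ^ 2 - 4)).

(* Main.v *)
Require Import Defs.
From Stdlib Require Import Reals.
From Stdlib Require Import Lra Psatz Lia.
Open Scope R_scope.

Ltac tpows t :=
  assert (0 <= t^2) by (apply pow_le; lra);
  assert (0 <= t^3) by (apply pow_le; lra);
  assert (0 <= t^4) by (apply pow_le; lra);
  assert (0 <= t^5) by (apply pow_le; lra);
  assert (0 <= t^6) by (apply pow_le; lra);
  assert (0 <= t^7) by (apply pow_le; lra);
  assert (0 <= t^8) by (apply pow_le; lra);
  assert (0 <= t^9) by (apply pow_le; lra);
  assert (0 <= t^10) by (apply pow_le; lra);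
  assert (0 <= t^11) by (apply pow_le; lra);
  assert (0 <= t^12) by (apply pow_le; lra).

Ltac shiftd d c := let t := fresh "t" in let Ht := fresh "Ht" in
  assert (exists t, 0<=t /\ d = c + t) as [t [Ht ->]] by (exists (d-c); split; lra); tpows t.

Lemma fle a b c e : 0<b -> 0<e -> a*e <= c*b -> a/b <= c/e.
Proof. intros Hb He H. unfold Rdiv. apply Rmult_le_reg_r with (b*e); [nra|].
replace (a*/b*(b*e)) with (a*e) by (field; lra).
replace (c*/e*(b*e)) with (c*b) by (field; lra). lra. Qed.

Lemma flt_r a b c : 0<b -> a < c*b -> a/b < c.
Proof. intros Hb H. unfold Rdiv. apply Rmult_lt_reg_r with b; [lra|].
replace (a*/b*b) with a by (field; lra). lra. Qed.

Definition aF d g h := (d^2*(d+3)*(d*g+3*h) - 4*(d+1)*(d+2)) / ((d^2-1)*(d+2)*(d+4)).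
Definition Da d := (d^2-1)*(d+2)*(d+4).

Lemma Da_pos d : 2 <= d -> 0 < Da d.
Proof. intros H. shiftd d 2. 
unfold Da. lra. Qed.

Lemma aF_pos d g h : 2 <= d -> 0 < g -> 0 < h -> 3/2 <= g*d -> 1 <= h*d -> 0 < aF d g h.
Proof. intros Hd Hg Hh H1 H2. unfold aF. apply Rdiv_lt_0_compat; [|apply (Da_pos d Hd)].
assert (0 <= d*(d+3) * (d*(g*d-3/2) + 3*(h*d-1))) by (apply Rmult_le_pos; [nra| nra]).
shiftd d 2. lra. Qed.

Lemma aF_lt d g h : 2 <= d -> 0 < h -> h < g -> g < 1 -> aF d g h < g.
Proof. intros Hd Hh H1 H2. unfold aF. apply flt_r; [apply (Da_pos d Hd)|].
assert (0 < d^3*(g-h)) by (apply Rmult_lt_0_compat; [apply pow_lt; lra|lra]).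
assert (0 < d^2*(7*g-9*h+4)) by (apply Rmult_lt_0_compat; [apply pow_lt; lra|lra]).
assert (0 < d*(12-6*g)) by (apply Rmult_lt_0_compat; lra).
lra. Qed.

Lemma aF_mono_d d g h : 2 <= d -> 0 < g -> g <= 3/4 -> 0 < h -> h <= 2/3*g ->
  aF d g h <= aF (2*d) g h.
Proof. intros Hd Hg1 Hg2 Hh1 Hh2. unfold aF. apply fle; [apply (Da_pos d Hd)|apply (Da_pos (2*d)); lra|].
shiftd d 2.
assert (0 <= g * (48*(2+t)+156*(2+t)^2+288*(2+t)^3+327*(2+t)^4+198*(2+t)^5+57*(2+t)^6+6*(2+t)^7))
  by (apply Rmult_le_pos; lra).
assert (0 <= (1-4/3*g) * (48*(2+t)+264*(2+t)^2+552*(2+t)^3+552*(2+t)^4+264*(2+t)^5+48*(2+t)^6))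
  by (apply Rmult_le_pos; lra).
assert (0 <= (2/3*g-h) * (216*(2+t)^2+276*(2+t)^3+108*(2+t)^4+132*(2+t)^5+108*(2+t)^6+24*(2+t)^7))
  by (apply Rmult_le_pos; lra).
lra. Qed.

Lemma aF_mono_k d g h : 2 <= d -> 0 <= g -> 0 <= h -> aF d (3/4*g) (1/2*h) <= aF d g h.
Proof. intros Hd Hg Hh. unfold aF. apply fle; try apply (Da_pos d Hd).
apply Rmult_le_compat_r; [left; apply (Da_pos d Hd)|].
assert (H0: 0 <= d^2*(d+3)) by (apply Rmult_le_pos; [apply pow_le|]; lra).
assert (0 <= d^2*(d+3)*(d*(g/4)+3*(h/2))) by (apply Rmult_le_pos; [exact H0| nra]).
lra. Qed.

Definition bF d g := (d^2*(d^2*g-4)+4)/((d^2-1)*(d^2-4)).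
Definition b1F d := (3*d^2-4)/(4*(d^2-1)).
Definition Eb d := (d^2-1)*(d^2-4).

Lemma Eb_pos d : 4 <= d -> 0 < Eb d.
Proof. intros H. unfold Eb. shiftd d 4. lra. Qed.

Lemma bF_34 d : 4 <= d -> bF d (3/4) = b1F d.
Proof. intros H. unfold bF, b1F. field. split; shiftd d 4; lra. Qed.

Lemma b1F_eq d : 2 <= d -> b1F d = 3/4 - 1/(4*(d^2-1)).
Proof. intros H. unfold b1F. field. shiftd d 2; lra. Qed.

Lemma a1_eq d : 2 <= d -> aF d (3/4) (1/2) = 3/4 - (3*d+1)/(4*(d^2-1)).
Proof. intros H. unfold aF. field. shiftd d 2; repeat split; lra. Qed.

Lemma b1F_pos d : 2 <= d -> 0 < b1F d.
Proof. intros H. unfold b1F. apply Rdiv_lt_0_compat; shiftd d 2; lra. Qed.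

Lemma b1F_lt d : 2 <= d -> b1F d < 3/4.
Proof. intros H. rewrite b1F_eq by lra.
assert (0 < 1/(4*(d^2-1))) by (apply Rdiv_lt_0_compat; shiftd d 2; lra). lra. Qed.

Lemma bF_pos d g : 4 <= d -> 4 <= g*d^2 -> 0 < bF d g.
Proof. intros H Hg. unfold bF. apply Rdiv_lt_0_compat; [|apply (Eb_pos d H)].
assert (0 <= d^2*(d^2*g-4)) by (apply Rmult_le_pos; [apply pow_le|]; lra). lra. Qed.

Lemma bF_lt d g : 4 <= d -> 0 < g -> g <= 9/16 -> bF d g < g.
Proof. intros H Hg1 Hg2. unfold bF. apply flt_r; [apply (Eb_pos d H)|].
assert (0 <= (d^2-16)*(4-5*g)) by (apply Rmult_le_pos; shiftd d 4; lra).
lra. Qed.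

Lemma bF_mono_d d g : 4 <= d -> 0 < g -> g <= 9/16 -> bF d g <= bF (2*d) g.
Proof. intros H Hg1 Hg2. unfold bF. apply fle; [apply (Eb_pos d H)|apply (Eb_pos (2*d)); lra|].
shiftd d 4.
assert (0 <= (9/16-g)*(60*(4+t)^4*((4+t)^2-1))) by (apply Rmult_le_pos; lra).
lra. Qed.

Lemma b1F_mono_d d : 2 <= d -> b1F d <= b1F (2*d).
Proof. intros H. rewrite !b1F_eq by lra.
assert (1/(4*((2*d)^2-1)) <= 1/(4*(d^2-1))); [|lra].
apply fle; shiftd d 2; lra. Qed.

Lemma bF_mono_k d g : 4 <= d -> 0 <= g -> bF d (3/4*g) <= bF d g.
Proof. intros H Hg. unfold bF. apply fle; try apply (Eb_pos d H).
apply Rmult_le_compat_r; [left; apply (Eb_pos d H)|].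
assert (0 <= d^2*d^2*g) by (apply Rmult_le_pos; [apply Rmult_le_pos; apply pow_le|]; lra).
lra. Qed.

Lemma aF_le_bF d g h : 4 <= d -> 0 < g -> 0 <= h -> h <= 2/3*g -> 3/2 <= g*d -> aF d g h <= bF d g.
Proof. intros H Hg Hh1 Hh2 Hgd. unfold aF, bF. apply fle; [apply (Da_pos d); lra|apply (Eb_pos d H)|].
assert (0 <= (2/3*g-h)*(3*d*(d+3)*(d-2))) by (apply Rmult_le_pos; [lra|]; shiftd d 4; lra).
assert (0 <= (g*d-3/2)*(d^2+4*d+12)) by (apply Rmult_le_pos; [lra|]; shiftd d 4; lra).
assert (0 <= 3*g*d^2*(d+2) - 3*h*d*(d+3)*(d-2) - 12*(d+1)) by (shiftd d 4; lra).
assert (0 <= ((d^2-1)*(d+2)*d) * (3*g*d^2*(d+2) - 3*h*d*(d+3)*(d-2) - 12*(d+1)))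
  by (apply Rmult_le_pos; [shiftd d 4|]; lra).
lra. Qed.

Lemma a1_le_b1 d : 2 <= d -> aF d (3/4) (1/2) <= b1F d.
Proof. intros H. rewrite a1_eq, b1F_eq by lra.
assert (1/(4*(d^2-1)) <= (3*d+1)/(4*(d^2-1))); [|lra].
apply fle; shiftd d 2; lra. Qed.

Lemma fle_r a b c : 0<b -> a <= c*b -> a/b <= c.
Proof. intros Hb H. unfold Rdiv. apply Rmult_le_reg_r with b; [lra|].
replace (a*/b*b) with a by (field; lra). lra. Qed.

Lemma fprod_le N1 N N' D : 0 < D -> N1*N <= N'*D -> (N1/D)*(N/D) <= N'/D.
Proof. intros HD H. replace ((N1/D)*(N/D)) with ((N1*N/D)/D) by (field; lra).
unfold Rdiv at 2. unfold Rdiv at 1. apply Rmult_le_compat_r; [left; apply Rinv_0_lt_compat; lra|].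
apply fle_r; lra. Qed.

Lemma fprod_ge N1 N N' D : 0 < D -> N'*D <= N1*N -> N'/D <= (N1/D)*(N/D).
Proof. intros HD H. replace ((N1/D)*(N/D)) with ((N1*N/D)/D) by (field; lra).
unfold Rdiv at 1. unfold Rdiv at 2. apply Rmult_le_compat_r; [left; apply Rinv_0_lt_compat; lra|].
unfold Rdiv. apply Rmult_le_reg_r with D; [lra|].
replace (N1*N*/D*D) with (N1*N) by (field; lra). lra. Qed.

Lemma step_b d g : 4 <= d -> 0 <= g -> g <= 1 -> bF d (3/4*g) <= b1F d * bF d g.
Proof. intros H Hg1 Hg2. rewrite <- bF_34 by lra. unfold bF. apply fprod_ge; [apply (Eb_pos d H)|].
assert (0 <= ((d^2-4)*d^2)*((4-g)*d^2-4)) by (apply Rmult_le_pos; [shiftd d 4; lra|]; nra).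
lra. Qed.

Lemma step_a d g h : 4 <= d -> 0 <= h -> h <= g -> 5/2 <= (g-h)*d ->
  aF d (3/4) (1/2) * aF d g h <= aF d (3/4*g) (1/2*h).
Proof. intros H Hh1 Hh2 Hw. unfold aF. apply fprod_le; [apply (Da_pos d); lra|].
assert (0 <= h*(144*d^2+396*d^3+314*d^4+96*d^5+10*d^6)) by (apply Rmult_le_pos; [lra|]; shiftd d 4; lra).
assert (0 <= ((g-h)*d-5/2)*(24*d^2+98*d^3+87*d^4+28*d^5+3*d^6)) by (apply Rmult_le_pos; [lra|]; shiftd d 4; lra).
shiftd d 4. lra. Qed.

Lemma step_a1 d : 4 <= d ->
  aF d (3/4) (1/2) * aF d (3/4) (1/2) <= aF d (3/4*(3/4)) (1/2*(1/2)).
Proof. intros H. unfold aF. apply fprod_le; [apply (Da_pos d); lra|].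
shiftd d 4. lra. Qed.

Lemma aF_close d g h : 2 <= d -> 0 <= g <= 1 -> 0 <= h <= 1 -> g - aF d g h <= 40/d.
Proof. intros H Hg Hh. unfold aF.
replace (g - (d^2*(d+3)*(d*g+3*h) - 4*(d+1)*(d+2)) / ((d^2-1)*(d+2)*(d+4)))
  with ((g*((d^2-1)*(d+2)*(d+4)) - (d^2*(d+3)*(d*g+3*h) - 4*(d+1)*(d+2))) / ((d^2-1)*(d+2)*(d+4)))
  by (field; shiftd d 2; repeat split; lra).
apply fle; [apply (Da_pos d H)|lra|].
assert (0 <= d*g*(6*d+8)) by (apply Rmult_le_pos; [apply Rmult_le_pos|]; lra).
assert (0 <= d*h*(3*d^3+9*d^2)) by (apply Rmult_le_pos; [apply Rmult_le_pos|]; shiftd d 2; lra).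
assert (0 <= d*(1-g)*(3*d^3+7*d^2)) by (apply Rmult_le_pos; [apply Rmult_le_pos|]; shiftd d 2; lra).
shiftd d 2. lra. Qed.

Lemma bF_close d g : 4 <= d -> 0 <= g <= 1 -> Rabs (bF d g - g) <= 40/d.
Proof. intros H Hg. unfold bF.
replace ((d^2*(d^2*g-4)+4)/((d^2-1)*(d^2-4)) - g)
  with ((d^2*(5*g-4) + 4*(1-g))/((d^2-1)*(d^2-4))) by (field; shiftd d 4; split; lra).
apply Rabs_le. split.
- replace (-(40/d)) with ((-40)/d) by (field; lra). apply fle; [lra|apply (Eb_pos d H)|].
  assert (0 <= d*d^2*g) by (apply Rmult_le_pos; [apply Rmult_le_pos; [|apply pow_le]|]; lra).
  assert (0 <= d*(1-g)) by (apply Rmult_le_pos; lra).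
  shiftd d 4. lra.
- apply fle; [apply (Eb_pos d H)|lra|].
  assert (0 <= d*d^2*g) by (apply Rmult_le_pos; [apply Rmult_le_pos; [|apply pow_le]|]; lra).
  assert (0 <= d*(1-g)) by (apply Rmult_le_pos; lra).
  assert (0 <= d*d^2*(1-g)) by (apply Rmult_le_pos; [apply Rmult_le_pos; [lra|apply pow_le; lra]|lra]). assert (0 <= d*g) by (apply Rmult_le_pos; lra). shiftd d 4. lra.
Qed.

Lemma dim_S n : dim (S n) = 2 * dim n.
Proof. unfold dim. simpl. ring. Qed.

Lemma dim_ge k n : (k <= n)%nat -> 2^k <= dim n.
Proof. intros H. unfold dim. apply Rle_pow; lra || lia. Qed.

Lemma dim_ge2 n : (1 <= n)%nat -> 2 <= dim n.
Proof. intros H. pose proof (dim_ge 1 n H). simpl in H0. lra. Qed.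

Lemma dim_ge4 n : (2 <= n)%nat -> 4 <= dim n.
Proof. intros H. pose proof (dim_ge 2 n H). simpl in H0. lra. Qed.

Lemma pow_decr x m n : 0 <= x <= 1 -> (m <= n)%nat -> x^n <= x^m.
Proof. intros Hx H. replace n with (m + (n-m))%nat by lia. rewrite pow_add.
assert (x^(n-m) <= 1). { rewrite <- (pow1 (n-m)). apply pow_incr. lra. }
assert (0 <= x^m) by (apply pow_le; lra). nra. Qed.

Lemma g_pos k : 0 < gamma^k.
Proof. apply pow_lt. unfold gamma. lra. Qed.
Lemma n_pos k : 0 < nu^k.
Proof. apply pow_lt. unfold nu. lra. Qed.

Lemma g_le1 k : (1 <= k)%nat -> gamma^k <= 3/4.
Proof. intros H. pose proof (pow_decr gamma 1 k ltac:(unfold gamma; lra) H). unfold gamma in *. simpl in H0. lra. Qed.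
Lemma g_le2 k : (2 <= k)%nat -> gamma^k <= 9/16.
Proof. intros H. pose proof (pow_decr gamma 2 k ltac:(unfold gamma; lra) H). unfold gamma in *. simpl in H0. lra. Qed.
Lemma g_le0 k : gamma^k <= 1.
Proof. pose proof (pow_decr gamma 0 k ltac:(unfold gamma; lra) (Nat.le_0_l k)) as H0. unfold gamma in *. simpl in H0. lra. Qed.
Lemma n_le0 k : nu^k <= 1.
Proof. pose proof (pow_decr nu 0 k ltac:(unfold nu; lra) (Nat.le_0_l k)) as H0. unfold nu in *. simpl in H0. lra. Qed.

Lemma n_le_g k : (1 <= k)%nat -> nu^k <= 2/3 * gamma^k.
Proof. intros H. replace nu with ((2/3)*gamma) by (unfold nu, gamma; field).
rewrite Rpow_mult_distr. pose proof (pow_decr (2/3) 1 k ltac:(lra) H). simpl in H0.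
pose proof (g_pos k). nra. Qed.

Lemma gd_ge k n : (1 <= k)%nat -> (k <= n)%nat -> 3/2 <= gamma^k * dim n.
Proof. intros H1 H2. pose proof (dim_ge k n H2). pose proof (g_pos k).
assert (gamma^k * 2^k = (3/2)^k) by (rewrite <- Rpow_mult_distr; f_equal; unfold gamma; field).
pose proof (Rle_pow (3/2) 1 k ltac:(lra) H1). simpl in H4. nra. Qed.

Lemma nd_ge k n : (k <= n)%nat -> 1 <= nu^k * dim n.
Proof. intros H2. pose proof (dim_ge k n H2). pose proof (n_pos k).
assert (nu^k * 2^k = 1) by (rewrite <- Rpow_mult_distr; replace (nu*2) with 1 by (unfold nu; field); apply pow1).
nra. Qed.

Lemma wd_ge k n : (2 <= k)%nat -> (S k <= n)%nat -> 5/2 <= (gamma^k - nu^k) * dim n.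
Proof. intros H1 H2. pose proof (dim_ge (S k) n H2). simpl in H.
assert (gamma^k * 2^k = (3/2)^k) by (rewrite <- Rpow_mult_distr; f_equal; unfold gamma; field).
assert (nu^k * 2^k = 1) by (rewrite <- Rpow_mult_distr; replace (nu*2) with 1 by (unfold nu; field); apply pow1).
pose proof (Rle_pow (3/2) 2 k ltac:(lra) H1). simpl in H3.
assert (0 <= gamma^k - nu^k). { pose proof (n_le_g k ltac:(lia)). pose proof (g_pos k). lra. }
assert (0 < 2^k) by (apply pow_lt; lra). nra. Qed.

Lemma alpha_eq n k : alpha n k = aF (dim n) (gamma^k) (nu^k).
Proof. reflexivity. Qed.

Lemma beta1_eq n : beta n 1 = b1F (dim n).
Proof. reflexivity. Qed.

Lemma beta_eq n k : (2 <= n)%nat -> beta n k = bF (dim n) (gamma^k).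
Proof. intros H. unfold beta. destruct (Nat.eqb k 1) eqn:E.
- apply Nat.eqb_eq in E. subst k. rewrite pow_1. unfold gamma. rewrite bF_34 by (apply dim_ge4; lia).
  reflexivity.
- reflexivity.
Qed.

Lemma bernoulli m x : -1 <= x -> 1 + INR m * x <= (1+x)^m.
Proof. intros Hx. induction m as [|m IH].
- simpl. lra.
- rewrite S_INR. simpl. assert (0 <= INR m) by apply pos_INR.
  assert (0 <= INR m * x^2) by (apply Rmult_le_pos; [lra| apply pow2_ge_0]).
  assert ((1+x)*(1+INR m * x) <= (1+x)*(1+x)^m) by (apply Rmult_le_compat_l; lra).
  nra.
Qed.

Lemma powdiff m x y c : 0 <= y -> y <= x -> x <= c -> c * (x^m - y^m) <= INR m * (x-y) * c^m.
Proof. intros H1 H2 H3. induction m as [|m IH].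
- simpl. lra.
- rewrite S_INR. simpl.
  assert (0 <= y^m) by (apply pow_le; lra).
  assert (y^m <= c^m) by (apply pow_incr; lra).
  assert (0 <= INR m) by apply pos_INR.
  assert (0 <= INR m * (x-y) * c^m) by (apply Rmult_le_pos; [apply Rmult_le_pos|apply pow_le]; lra).
  assert (x * (c*(x^m - y^m)) <= x * (INR m * (x-y) * c^m)) by (apply Rmult_le_compat_l; lra).
  assert (x * (INR m * (x-y) * c^m) <= c * (INR m * (x-y) * c^m)) by (apply Rmult_le_compat_r; lra).
  assert (c * y^m * (x-y) <= c * c^m * (x-y)) by (apply Rmult_le_compat_r; [lra|apply Rmult_le_compat_l; lra]).
  nra.
Qed.

Lemma gS k : gamma^(S k) = 3/4 * gamma^k.
Proof. simpl. unfold gamma. ring. Qed.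
Lemma nS k : nu^(S k) = 1/2 * nu^k.
Proof. simpl. unfold nu. ring. Qed.

Lemma part1 n k : (1 <= k)%nat -> (k <= n)%nat ->
     alpha n k <= alpha (S n) k /\ beta n k <= beta (S n) k.
Proof. intros H1 H2. split.
- rewrite !alpha_eq, dim_S. apply aF_mono_d.
  + apply dim_ge2; lia.
  + apply g_pos.
  + apply g_le1; lia.
  + apply n_pos.
  + apply n_le_g; lia.
- destruct (Nat.eq_dec k 1) as [->|Hk].
  + rewrite !beta1_eq, dim_S. apply b1F_mono_d. apply dim_ge2; lia.
  + rewrite !beta_eq by lia. rewrite dim_S. apply bF_mono_d.
    * apply dim_ge4; lia.
    * apply g_pos.
    * apply g_le2; lia.
Qed.

Lemma part2 n k : (1 <= k)%nat -> (S k <= n)%nat ->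
     alpha n (S k) <= alpha n k /\ beta n (S k) <= beta n k.
Proof. intros H1 H2. split.
- rewrite !alpha_eq, gS, nS. apply aF_mono_k.
  + apply dim_ge2; lia.
  + left; apply g_pos.
  + left; apply n_pos.
- rewrite !beta_eq by lia. rewrite gS. apply bF_mono_k.
  + apply dim_ge4; lia.
  + left; apply g_pos.
Qed.

Lemma half_dim n : (1/2)^n * dim n = 1.
Proof. unfold dim. rewrite <- Rpow_mult_distr. replace (1/2*2) with 1 by field. apply pow1. Qed.

Lemma part3 k : (1 <= k)%nat ->
     Un_cv (fun n => alpha n k) (gamma ^ k) /\ Un_cv (fun n => beta n k) (gamma ^ k).
Proof. intros Hk.
assert (HC: forall eps, 0 < eps -> exists N, forall n, (n >= N)%nat -> 40 / dim n < eps).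
{ intros eps Heps. destruct (pow_lt_1_zero (1/2) ltac:(rewrite Rabs_pos_eq; lra) (eps/40) ltac:(lra)) as [N HN].
  exists N. intros n Hn. specialize (HN n Hn). rewrite Rabs_pos_eq in HN by (apply pow_le; lra).
  pose proof (half_dim n). assert (0 < dim n) by (unfold dim; apply pow_lt; lra).
  assert (E: (1/2)^n = /dim n) by (apply Rmult_eq_reg_r with (dim n); [rewrite H; field|]; lra).
  unfold Rdiv at 1. rewrite <- E.
  lra. }
pose proof (g_pos k). pose proof (g_le1 k Hk). pose proof (n_pos k). pose proof (n_le_g k Hk).
pose proof (g_le0 k). pose proof (n_le0 k).
split; intros eps Heps; destruct (HC eps Heps) as [N HN]; exists (N + k + 2)%nat; intros n Hn;
  specialize (HN n ltac:(lia)); unfold R_dist.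
- rewrite alpha_eq.
  assert (aF (dim n) (gamma^k) (nu^k) < gamma^k) by (apply aF_lt; try lra; apply dim_ge2; lia).
  pose proof (aF_close (dim n) (gamma^k) (nu^k) ltac:(apply dim_ge2; lia) ltac:(lra) ltac:(lra)).
  rewrite Rabs_left by lra. lra.
- rewrite beta_eq by lia.
  pose proof (bF_close (dim n) (gamma^k) ltac:(apply dim_ge4; lia) ltac:(lra)). lra.
Qed.

Lemma a1_nonneg n : (1 <= n)%nat -> 0 <= alpha n 1.
Proof. intros H. left. rewrite alpha_eq. apply aF_pos.
- apply dim_ge2; lia.
- apply g_pos.
- apply n_pos.
- apply gd_ge; lia.
- apply nd_ge; lia.
Qed.

Lemma chain_a n : forall j, (1 <= j)%nat -> (j <= n)%nat -> alpha n 1 ^ j <= alpha n j.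
Proof. intros j. induction j as [|j IH]; intros H1 H2; [lia|].
destruct (Nat.eq_dec j 0) as [->|Hj]; [simpl; lra|].
pose proof (a1_nonneg n ltac:(lia)).
assert (alpha n 1 * alpha n 1 ^ j <= alpha n 1 * alpha n j) by (apply Rmult_le_compat_l; [lra|apply IH; lia]).
assert (alpha n 1 * alpha n j <= alpha n (S j)); [|simpl; lra].
rewrite !alpha_eq, (gS j), (nS j).
destruct (Nat.eq_dec j 1) as [->|Hj1].
- rewrite !pow_1. unfold gamma, nu. apply step_a1. apply dim_ge4; lia.
- rewrite !pow_1. unfold gamma at 1, nu at 1. apply step_a.
  + apply dim_ge4; lia.
  + left; apply n_pos.
  + pose proof (n_le_g j ltac:(lia)). pose proof (g_pos j). lra.
  + apply wd_ge; lia.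
Qed.

Lemma chain_b n : forall j, (1 <= j)%nat -> (j <= n)%nat -> beta n j <= beta n 1 ^ j.
Proof. intros j. induction j as [|j IH]; intros H1 H2; [lia|].
destruct (Nat.eq_dec j 0) as [->|Hj]; [simpl; lra|].
assert (0 <= beta n 1) by (rewrite beta1_eq; left; apply b1F_pos; apply dim_ge2; lia).
assert (beta n 1 * beta n j <= beta n 1 * beta n 1 ^ j) by (apply Rmult_le_compat_l; [lra|apply IH; lia]).
assert (beta n (S j) <= beta n 1 * beta n j); [|simpl; lra].
rewrite (beta_eq n (S j)) by lia. rewrite (beta_eq n j) by lia. rewrite beta1_eq, gS.
apply step_b.
- apply dim_ge4; lia.
- left; apply g_pos.
- apply g_le0.
Qed.

Lemma part4 n k l : (1 <= k)%nat -> (k <= n)%nat ->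
     let d := dim n in
     (0 < alpha n k < gamma ^ k) /\ (0 < beta n k < gamma ^ k) /\
     gamma ^ (k * l) * (1 - INR (k * l) * (3 * d + 1) / (3 * (d ^ 2 - 1)))
       <= alpha n 1 ^ (k * l) /\
     alpha n 1 ^ (k * l) <= alpha n k ^ l /\
     alpha n k ^ l <= beta n k ^ l /\
     beta n k ^ l <= beta n 1 ^ (k * l) /\
     beta n 1 ^ (k * l)
       <= alpha n 1 ^ (k * l) + INR (k * l) * d / (d ^ 2 - 1) * gamma ^ (k * l).
Proof. intros Hk Hkn. cbv zeta.
assert (Hd: 2 <= (dim n)) by (apply dim_ge2; lia).
pose proof (g_pos k). pose proof (g_le1 k Hk). pose proof (n_pos k). pose proof (n_le_g k Hk).
assert (Ha: 0 < alpha n k < gamma ^ k).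
{ rewrite alpha_eq. split.
  - apply aF_pos; [lra|lra|lra|apply gd_ge; lia|apply nd_ge; lia].
  - apply aF_lt; lra. }
assert (Hb: 0 < beta n k < gamma ^ k).
{ destruct (Nat.eq_dec k 1) as [->|Hk1].
  - rewrite beta1_eq, pow_1. split; [apply b1F_pos|unfold gamma; apply b1F_lt]; lra.
  - rewrite beta_eq by lia. pose proof (g_le2 k ltac:(lia)).
    assert (4 <= dim n) by (apply dim_ge4; lia). split.
    + apply bF_pos; [lra|]. pose proof (gd_ge k n Hk Hkn). nra.
    + apply bF_lt; lra. }
assert (Hab: alpha n k <= beta n k).
{ destruct (Nat.eq_dec k 1) as [->|Hk1].
  - rewrite alpha_eq, beta1_eq, !pow_1. unfold gamma, nu. apply a1_le_b1; lra.
  - rewrite alpha_eq, beta_eq by lia. apply aF_le_bF; try lra.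
    + apply dim_ge4; lia.
    + apply gd_ge; lia. }
assert (HA1: alpha n 1 = 3/4 - (3*(dim n)+1)/(4*((dim n)^2-1))) by (rewrite alpha_eq, !pow_1; unfold gamma, nu; apply a1_eq; lra).
assert (HB1: beta n 1 = 3/4 - 1/(4*((dim n)^2-1))) by (rewrite beta1_eq; apply b1F_eq; lra).
pose proof (a1_nonneg n ltac:(lia)) as Ha1.
assert (Hb1: 0 <= beta n 1) by (rewrite beta1_eq; left; apply b1F_pos; lra).
assert (Hb1l: beta n 1 <= 3/4) by (rewrite beta1_eq; left; apply b1F_lt; lra).
assert (Hab1: alpha n 1 <= beta n 1) by (rewrite alpha_eq, beta1_eq, !pow_1; unfold gamma, nu; apply a1_le_b1; lra).
assert (Hdd: 0 < (dim n)^2-1) by nra.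
split; [exact Ha|]. split; [exact Hb|]. split; [|split; [|split; [|split]]].
-
  set (e := (3*(dim n)+1)/(3*((dim n)^2-1))).
  assert (He: e <= 1). { unfold e. apply fle_r; [lra|]. nra. }
  assert (HA1': alpha n 1 = gamma * (1 + - e)) by (rewrite HA1; unfold e, gamma; field; lra).
  rewrite HA1', Rpow_mult_distr.
  replace (1 - INR (k*l) * (3*(dim n)+1) / (3*((dim n)^2-1))) with (1 + INR (k*l) * - e) by (unfold e; field; lra).
  apply Rmult_le_compat_l; [apply pow_le; unfold gamma; lra|]. apply bernoulli. lra.
- rewrite pow_mult. apply pow_incr. split; [apply pow_le; lra|]. apply chain_a; lia.
- apply pow_incr. lra.
- rewrite pow_mult. apply pow_incr. split; [lra|]. apply chain_b; lia.
- pose proof (powdiff (k*l) (beta n 1) (alpha n 1) gamma Ha1 Hab1 ltac:(unfold gamma; lra)) as HP.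
  assert (E: INR (k*l) * (dim n) / ((dim n)^2-1) * gamma^(k*l) = 4/3 * (INR (k*l) * (beta n 1 - alpha n 1) * gamma^(k*l)))
    by (rewrite HA1, HB1; field; lra).
  rewrite E. unfold gamma in HP at 1. lra.
Qed.

Theorem mainTheorem12 :
  (forall n k : nat, (1 <= k)%nat -> (k <= n)%nat ->
     alpha n k <= alpha (S n) k /\ beta n k <= beta (S n) k) /\
  (forall n k : nat, (1 <= k)%nat -> (S k <= n)%nat ->
     alpha n (S k) <= alpha n k /\ beta n (S k) <= beta n k) /\
  (forall k : nat, (1 <= k)%nat ->
     Un_cv (fun n => alpha n k) (gamma ^ k) /\
     Un_cv (fun n => beta n k) (gamma ^ k)) /\
  (forall n k l : nat, (1 <= k)%nat -> (k <= n)%nat ->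
     let d := dim n in
     (0 < alpha n k < gamma ^ k) /\ (0 < beta n k < gamma ^ k) /\
     gamma ^ (k * l) * (1 - INR (k * l) * (3 * d + 1) / (3 * (d ^ 2 - 1)))
       <= alpha n 1 ^ (k * l) /\
     alpha n 1 ^ (k * l) <= alpha n k ^ l /\
     alpha n k ^ l <= beta n k ^ l /\
     beta n k ^ l <= beta n 1 ^ (k * l) /\
     beta n 1 ^ (k * l)
       <= alpha n 1 ^ (k * l) + INR (k * l) * d / (d ^ 2 - 1) * gamma ^ (k * l)).
Proof.
split; [exact part1|]. split; [exact part2|]. split; [exact part3|]. exact part4.
Qed.
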